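(* Let $m\in(0,1)$, $h_0,h_1\in\mathbb{R}$, and let $(P_t)_{t\ge0}$ be the residual polynomials of $\mathrm{HB}_2(h_0,h_1;m)$, i.e. the polynomials with $x_t-x_*=P_t(H)(x_0-x_* )$ for every quadratic $f(x)=\tfrac12(x-x_* )^\top H(x-x_* )+f_*$ and every $x_0$. Let $\zeta(\lambda)=\left(\frac{1+m-\lambda h_0}{2\sqrt m}\right)\left(\frac{1+m-\lambda h_1}{2\sqrt m}\right)$. Then for every $n\ge0$ and every $\lambda$ with $\zeta(\lambda)\ge0$ (in particular whenever $2\zeta(\lambda)-1\ge-1$), $$P_{2n}(\lambda)=m^n\left[\frac{2m}{1+m}T_{2n}\big(\sqrt{\zeta(\lambda)}\big)+\frac{1-m}{1+m}U_{2n}\big(\sqrt{\zeta(\lambda)}\big)\right].$$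
   Context: $\mathrm{HB}_2(h_0,h_1;m)$ started at $x_0$ produces $x_1=x_0-\frac{h_0}{1+m}\nabla f(x_0)$ and $x_{t+1}=x_t-h_{t\bmod 2}\nabla f(x_t)+m(x_t-x_{t-1})$ for $t\ge1$. $T_n$ and $U_n$ are the Chebyshev polynomials of the first and second kind ($T_0=U_0=1$, $T_1(x)=x$, $U_1(x)=2x$, both satisfying $Q_{n+1}=2xQ_n-Q_{n-1}$). *)

(* Defs.v *)
From Stdlib Require Import Reals.
Open Scope R_scope.

(* The HB_2(h0,h1;m) method on R with gradient g, started at x0.
   hb2_pair h0 h1 m g x0 t = (x_t, x_{t+1}), where
   x_1 = x_0 - h0/(1+m) g(x_0) and
   x_{t+1} = x_t - h_{t mod 2} g(x_t) + m (x_t - x_{t-1}) for t >= 1. *)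
Fixpoint hb2_pair (h0 h1 m : R) (g : R -> R) (x0 : R) (t : nat) : R * R :=
  match t with
  | O => (x0, x0 - h0 / (1 + m) * g x0)
  | S t' =>
      let (a, b) := hb2_pair h0 h1 m g x0 t' in
      (b, b - (if Nat.even (S t') then h0 else h1) * g b + m * (b - a))
  end.

Definition hb2 (h0 h1 m : R) (g : R -> R) (x0 : R) (t : nat) : R :=
  fst (hb2_pair h0 h1 m g x0 t).

(* Residual polynomial P_t of HB_2(h0,h1;m) evaluated at lambda:
   x_t - x_* = P_t(H)(x_0 - x_* ) for the quadratic with Hessian H; taking
   the one-dimensional quadratic f(x) = lambda/2 x^2 (H = lambda, x_* = 0,
   gradient x |-> lambda x) and x_0 = 1 gives P_t(lambda) = x_t. *)
Definition resP (h0 h1 m : R) (t : nat) (lambda : R) : R :=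
  hb2 h0 h1 m (fun x => lambda * x) 1 t.

Fixpoint cheb_pair (a0 a1 x : R) (n : nat) : R * R :=
  match n with
  | O => (a0, a1)
  | S n' => let (p, q) := cheb_pair a0 a1 x n' in (q, 2 * x * q - p)
  end.

Definition chebT (n : nat) (x : R) : R := fst (cheb_pair 1 x x n).
Definition chebU (n : nat) (x : R) : R := fst (cheb_pair 1 (2 * x) x n).

Definition zeta (h0 h1 m lambda : R) : R :=
  ((1 + m - lambda * h0) / (2 * sqrt m)) * ((1 + m - lambda * h1) / (2 * sqrt m)).

(* Main.v *)
Require Import Defs.
From Stdlib Require Import Reals Lra Lia.
Open Scope R_scope.

Lemma resP_step h0 h1 m l t :
  resP h0 h1 m (S (S t)) l =
  (1 + m - (if Nat.even (S t) then h0 else h1) * l) * resP h0 h1 m (S t) l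
  - m * resP h0 h1 m t l.
Proof.
  unfold resP, hb2. cbn [hb2_pair].
  destruct (hb2_pair h0 h1 m (fun x => l * x) 1 t) as [a b]; simpl. ring.
Qed.

Lemma cheb_step a0 a1 x k :
  fst (cheb_pair a0 a1 x (S (S k))) =
  2 * x * fst (cheb_pair a0 a1 x (S k)) - fst (cheb_pair a0 a1 x k).
Proof.
  cbn [cheb_pair]. destruct (cheb_pair a0 a1 x k) as [p q]; simpl. ring.
Qed.

Lemma cheb_even a0 a1 x k :
  fst (cheb_pair a0 a1 x (S (S (S (S k))))) =
  (4 * (x * x) - 2) * fst (cheb_pair a0 a1 x (S (S k))) - fst (cheb_pair a0 a1 x k).
Proof.
  rewrite (cheb_step _ _ _ (S (S k))), (cheb_step _ _ _ (S k)).
  rewrite (cheb_step _ _ _ k). ring.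
Qed.

Lemma even2 k : Nat.even (2 * k) = true.
Proof. induction k. reflexivity. replace (2 * S k)%nat with (S (S (2 * k))) by lia. exact IHk. Qed.
Lemma odd2 k : Nat.even (S (2 * k)) = false.
Proof. induction k. reflexivity. replace (S (2 * S k))%nat with (S (S (S (2 * k)))) by lia. exact IHk. Qed.

Lemma resP_even h0 h1 m l k :
  resP h0 h1 m (S (S (S (S (2 * k))))) l =
  ((1 + m - h0 * l) * (1 + m - h1 * l) - 2 * m) * resP h0 h1 m (S (S (2 * k))) l
  - m * m * resP h0 h1 m (2 * k) l.
Proof.
  rewrite (resP_step _ _ _ _ (S (S (2 * k)))), (resP_step _ _ _ _ (S (2 * k))).
  rewrite (resP_step _ _ _ _ (2 * k)).
  replace (S (S (S (2 * k)))) with (S (2 * S k)) by lia.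
  replace (S (S (2 * k))) with (2 * S k)%nat by lia.
  rewrite !odd2, !even2. ring.
Qed.

Theorem mainTheorem14 (m h0 h1 : R) (hm : 0 < m < 1) (n : nat) (lambda : R)
  (hz : 0 <= zeta h0 h1 m lambda) :
  resP h0 h1 m (2 * n) lambda =
  m ^ n * (2 * m / (1 + m) * chebT (2 * n) (sqrt (zeta h0 h1 m lambda))
           + (1 - m) / (1 + m) * chebU (2 * n) (sqrt (zeta h0 h1 m lambda))).
Proof.
  set (z := sqrt (zeta h0 h1 m lambda)).
  set (A := 1 + m - h0 * lambda).
  set (B := 1 + m - h1 * lambda).
  assert (Hs : sqrt m * sqrt m = m) by (apply sqrt_sqrt; lra).
  assert (Hsp : 0 < sqrt m) by (apply sqrt_lt_R0; lra).
  assert (HZ : z * z = A * B / (4 * m)).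
  { unfold z. rewrite sqrt_sqrt by exact hz. unfold zeta, A, B.
    replace (4 * m) with (2 * sqrt m * (2 * sqrt m)) by nra.
    field. lra. }
  assert (main : forall n, resP h0 h1 m (2 * n) lambda =
    m ^ n * (2 * m / (1 + m) * chebT (2 * n) z + (1 - m) / (1 + m) * chebU (2 * n) z)
    /\ resP h0 h1 m (2 * S n) lambda =
    m ^ (S n) * (2 * m / (1 + m) * chebT (2 * S n) z + (1 - m) / (1 + m) * chebU (2 * S n) z)).
  { induction n0 as [|k [IH1 IH2]].
    - split.
      + unfold resP, hb2, chebT, chebU. simpl. field. lra.
      + replace (2 * 1)%nat with 2%nat by lia.
        rewrite resP_step. simpl Nat.even.
        unfold chebT, chebU. rewrite !cheb_step. simpl fst.
        replace (2 * z * z - 1) with (2 * (z * z) - 1) by ring.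
        replace (2 * z * (2 * z) - 1) with (4 * (z * z) - 1) by ring.
        rewrite HZ. unfold resP, hb2. simpl. unfold A, B. field. lra.
    - split; [exact IH2|].
      replace (2 * S (S k))%nat with (S (S (S (S (2 * k))))) by lia.
      rewrite resP_even.
      unfold chebT, chebU in *.
      rewrite !cheb_even.
      replace (S (S (2 * k))) with (2 * S k)%nat by lia.
      rewrite IH1, IH2.
      rewrite HZ. simpl pow. fold A B. field. lra. }
  exact (proj1 (main n)).
Qed.
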